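(* Let $R$ be a commutative ring in which $2$ is invertible and $n\ge3$. Equip $R^{2n+1}$ with the standard form of matrix $\tilde\phi_{2n+1}=(2)\perp\widetilde{\psi}_n$. Let $u=(0,u_1',u_1'',u_2',u_2'',\dots,u_n',u_n'')\in R^{2n+1}$ be an isotropic unimodular vector and $v=(0,v_1',v_1'',\dots,v_n',v_n'')\in R^{2n+1}$ with $\langle u,v\rangle=0$. Then $\sigma_{u,v}\in\mathrm{EO}_{2n+1}(R)$.
   Context: $e_{i,j}$ are matrix units and $\widetilde{\psi}_s=\sum_{i=1}^s(e_{2i-1,2i}+e_{2i,2i-1})$. On $R^{2n+1}$ with coordinates $(a_1,a_1',a_1'',\dots,a_n',a_n'')$ the bilinear form is $\langle a,b\rangle=a^t\tilde\phi_{2n+1}b=2a_1b_1+\sum_i(a_i'b_i''+a_i''b_i')$ and the quadratic form is $q(a)=\tfrac12\langle a,a\rangle=a_1^2+\sum_ia_i'a_i''$. For $u,v$ with $u$ unimodular, $q(u)=0$, $\langle u,v\rangle=0$ and $r=q(v)$, the Eichler–Siegel–Dickson transvection is $\sigma_{u,v}(x)=x+\langle v,x\rangle u-\langle u,x\rangle v-r\langle u,x\rangle u$. Odd elementary orthogonal group: for $N=2s+1$ and $1\le i\le s$, $\lambda\in R$, $F^1_i(\lambda)=I_N+\lambda(e_{1,2i+1}-2e_{2i,1}-\lambda e_{2i,2i+1})$, $F^2_i(\lambda)=I_N+\lambda(e_{1,2i}-2e_{2i+1,1}-\lambda e_{2i+1,2i})$; $\mathrm{EO}_{2s+1}(R)$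 is the group they generate. *)

(* Defs.v *)
From HB Require Import structures.
From mathcomp Require Import all_boot all_order all_algebra.
Set Implicit Arguments. Unset Strict Implicit. Unset Printing Implicit Defensive.
Import GRing.Theory.
Local Open Scope ring_scope.

(* Coordinates of R^(2s+1) are indexed 0..2s (0-based).
   Index 0 is a_1, index 2i-1 is a_i', index 2i is a_i'' (1 <= i <= s).
   A 1-based matrix unit e_{j,k} is delta_mx (j-1) (k-1). *)

Section Defs.
Variable R : comUnitRingType.
Variable s : nat.
Notation N := (s.*2.+1).

Definition ix (k : nat) : 'I_N := inord k.

Definition phi_tilde : 'M[R]_N :=
  \matrix_(j, k)
    if (j == 0%N :> nat) && (k == 0%N :> nat) then 2%:R
    else if (0 < j)%N && (0 < k)%N &&
            (((odd j) && (k == j.+1 :> nat)) || ((odd k) && (j == k.+1 :> nat)))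
         then 1 else 0.

Definition bform (a b : 'cV[R]_N) : R := (a^T *m phi_tilde *m b) ord0 ord0.

Definition qform (a : 'cV[R]_N) : R :=
  a (ix 0) ord0 ^+ 2 +
  \sum_(i < s) a (ix i.*2.+1) ord0 * a (ix i.*2.+2) ord0.

Definition unimodular (a : 'cV[R]_N) : Prop :=
  exists w : 'cV[R]_N, \sum_(k < N) w k ord0 * a k ord0 = 1.

(* Eichler--Siegel--Dickson transvection, as the matrix of
   x |-> x + <v,x> u - <u,x> v - r <u,x> u,  r = q(v). *)
Definition esd (u v : 'cV[R]_N) : 'M[R]_N :=
  1%:M + u *m (v^T *m phi_tilde) - v *m (u^T *m phi_tilde)
       - qform v *: (u *m (u^T *m phi_tilde)).

(* generators, for i : 'I_s standing for the 1-based index i+1 *)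
Definition emx (j k : nat) : 'M[R]_N := delta_mx (ix j) (ix k).

(* F^1_i(l) = I + l (e_{1,2i+1} - 2 e_{2i,1} - l e_{2i,2i+1}) *)
Definition F1 (i : 'I_s) (l : R) : 'M[R]_N :=
  1%:M + l *: (emx 0 i.*2.+2 - 2%:R *: emx i.*2.+1 0 - l *: emx i.*2.+1 i.*2.+2).
(* F^2_i(l) = I + l (e_{1,2i} - 2 e_{2i+1,1} - l e_{2i+1,2i}) *)
Definition F2 (i : 'I_s) (l : R) : 'M[R]_N :=
  1%:M + l *: (emx 0 i.*2.+1 - 2%:R *: emx i.*2.+2 0 - l *: emx i.*2.+2 i.*2.+1).

Definition EO_gen (g : 'M[R]_N) : Prop :=
  exists i l, g = F1 i l \/ g = F2 i l.

Inductive in_EO : 'M[R]_N -> Prop :=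
| EO_one : in_EO 1%:M
| EO_mul g A : EO_gen g -> in_EO A -> in_EO (g *m A)
| EO_mulV g A : EO_gen g -> in_EO A -> in_EO (invmx g *m A).

End Defs.

(* Main.v *)
Require Import Defs.
From HB Require Import structures.
From mathcomp Require Import all_boot all_order all_algebra.
From mathcomp Require Import ring zify.
Set Implicit Arguments. Unset Strict Implicit. Unset Printing Implicit Defensive.
Import GRing.Theory.
Local Open Scope ring_scope.

Section Work.
Variable R : comUnitRingType.
Variable n : nat.
Local Notation N := (n.*2.+1).
Local Notation V := 'cV[R]_N.
Local Notation phi := (phi_tilde R n).

Definition E (k : 'I_N) : V := delta_mx k ord0.
Definition pnx (m : nat) : nat := if odd m then m.+1 else m.-1.

Lemma mx11 m (u : 'cV[R]_m) (a : 'M[R]_1) : u *m a = a ord0 ord0 *: u.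
Proof.
apply/matrixP => i j; rewrite !mxE big_ord1 (ord1 j) mulrC //.
Qed.

Lemma mx_ext (A B : 'M[R]_N) : (forall x : V, A *m x = B *m x) -> A = B.
Proof.
move=> H; apply/matrixP => i j.
have := congr1 (fun m : V => m i ord0) (H (delta_mx j ord0)).
by rewrite -!colE !mxE.
Qed.

Lemma esd_apply (u v x : V) : esd u v *m x =
  x + bform v x *: u - bform u x *: v - (qform v * bform u x) *: u.
Proof.
rewrite /esd /bform !mulmxBl !mulmxDl mul1mx -!scalemxAl -!mulmxA !mx11.
by rewrite !scalerA !mulmxA.
Qed.

Lemma bformDl (a b c : V) : bform (a + b) c = bform a c + bform b c.
Proof. by rewrite /bform linearD /= !mulmxDl mxE. Qed.
Lemma bformDr (a b c : V) : bform c (a + b) = bform c a + bform c b.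
Proof. by rewrite /bform !mulmxDr mxE. Qed.
Lemma bformZl (k : R) (a c : V) : bform (k *: a) c = k * bform a c.
Proof. by rewrite /bform linearZ /= -!scalemxAl mxE. Qed.
Lemma bformZr (k : R) (a c : V) : bform c (k *: a) = k * bform c a.
Proof. by rewrite /bform -!scalemxAr mxE. Qed.
Lemma bformNl (a c : V) : bform (- a) c = - bform a c.
Proof. by rewrite -scaleN1r bformZl mulN1r. Qed.
Lemma bformNr (a c : V) : bform c (- a) = - bform c a.
Proof. by rewrite -scaleN1r bformZr mulN1r. Qed.
Lemma bformBl (a b c : V) : bform (a - b) c = bform a c - bform b c.
Proof. by rewrite bformDl bformNl. Qed.
Lemma bformBr (a b c : V) : bform c (a - b) = bform c a - bform c b.
Proof. by rewrite bformDr bformNr. Qed.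
Lemma bform0l (c : V) : bform 0 c = 0.
Proof. by rewrite -(scale0r 0) bformZl mul0r. Qed.
Lemma bform0r (c : V) : bform c 0 = 0.
Proof. by rewrite -(scale0r 0) bformZr mul0r. Qed.

Lemma phiE (j k : 'I_N) : phi j k =
  if (j == 0 :> nat) && (k == 0 :> nat) then 2%:R
  else if (0 < j)%N && (k == pnx j :> nat) then 1 else 0.
Proof.
rewrite mxE; case: ifP => // _; congr (if _ then _ else _).
case: j k => [j hj] [k hk] /=; rewrite /pnx.
case: (posnP j) => [->|jpos] //=.
apply/idP/idP; case: ifP => oj H; lia.
Qed.

Lemma phi_sym : phi^T = phi.
Proof.
apply/matrixP => i j; rewrite mxE !phiE andbC.
case: ifP => // _; congr (if _ then _ else _).
case: i j => [i hi] [j hj] /=; rewrite /pnx.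
apply/idP/idP; case: ifP => oi; case: ifP => oj H; lia.
Qed.

Lemma bform_sym (a b : V) : bform a b = bform b a.
Proof.
rewrite /bform; transitivity ((a^T *m phi *m b)^T ord0 ord0); first by rewrite [RHS]mxE.
by rewrite !trmx_mul trmxK phi_sym mulmxA.
Qed.

Definition xn (x : V) (m : nat) : R := x (ix n m) ord0.

Lemma xnE (x : V) (k : 'I_N) : x k ord0 = xn x k.
Proof. by rewrite /xn /ix inord_val. Qed.

Lemma sum_delta (k0 : 'I_N) (F : 'I_N -> R) (c : R) :
  \sum_k (if k == k0 then c else 0) * F k = c * F k0.
Proof.
rewrite (bigD1 k0) //= big1 ?addr0 ?eqxx // => k /negbTE ->; by rewrite mul0r.
Qed.

Lemma pnx_lt (j : 'I_N) : (0 < j)%N -> (pnx j < N)%N.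
Proof. case: j => j hj /= jp; rewrite /pnx; case: ifP => oj; lia. Qed.

Lemma bformE_l (j : 'I_N) (x : V) :
  bform (E j) x = if (j == 0 :> nat) then 2%:R * xn x j else xn x (pnx j).
Proof.
rewrite /bform /E trmx_delta -rowE.
transitivity (\sum_k phi j k * x k ord0).
  rewrite mxE; apply: eq_bigr => k _; by rewrite mxE.
under eq_bigr => k _ do rewrite phiE.
case: ifP => j0.
  have -> : j = ord0 by apply/val_inj/eqP.
  transitivity (\sum_k (if k == ord0 then 2%:R else 0) * x k ord0).
    apply: eq_bigr => k _ /=.
    have -> : (k == ord0) = (k == 0 :> nat) by rewrite -val_eqE.
    by case: ifP.
  by rewrite sum_delta xnE.
have jp : (0 < j)%N by rewrite lt0n j0.
transitivity (\sum_k (if k == ix n (pnx j) then 1 else 0) * x k ord0).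
  apply: eq_bigr => k _.
  rewrite andFb jp andTb.
  have -> : (k == ix n (pnx j)) = (k == pnx j :> nat).
    by rewrite -val_eqE /= /ix inordK // pnx_lt.
  by [].
by rewrite sum_delta mul1r.
Qed.

Lemma vec_sum (x : V) : x = \sum_k x k ord0 *: E k.
Proof.
rewrite {1}(matrix_sum_delta x); apply: eq_bigr => k _; by rewrite big_ord1.
Qed.

Lemma bform_suml I (r : seq I) (P : pred I) (F : I -> V) (y : V) :
  bform (\sum_(i <- r | P i) F i) y = \sum_(i <- r | P i) bform (F i) y.
Proof. exact: (big_morph _ (fun a b => bformDl a b y) (bform0l y)). Qed.
Lemma bform_sumr I (r : seq I) (P : pred I) (F : I -> V) (y : V) :
  bform y (\sum_(i <- r | P i) F i) = \sum_(i <- r | P i) bform y (F i).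
Proof. exact: (big_morph _ (fun a b => bformDr a b y) (bform0r y)). Qed.

Lemma bform_expand (x y : V) : bform x y = \sum_k x k ord0 * bform (E k) y.
Proof.
rewrite {1}(vec_sum x) bform_suml; apply: eq_bigr => k _; by rewrite bformZl.
Qed.

Lemma sum_pairs (G : nat -> R) m :
  \sum_(i < m.*2) G i = \sum_(i < m) (G i.*2 + G i.*2.+1).
Proof.
elim: m => [|m IH]; first by rewrite !big_ord0.
by rewrite doubleS !big_ord_recr /= IH addrA.
Qed.

Lemma bform_qform (x : V) : bform x x = 2%:R * qform x.
Proof.
rewrite bform_expand.
under eq_bigr => k _ do rewrite bformE_l xnE.
pose H m := xn x m * (if m == 0%N then 2%:R * xn x m else xn x (pnx m)).
rewrite (eq_bigr (fun k : 'I_N => H k)) //.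
rewrite -(big_mkord xpredT H) big_ltn // big_add1.

rewrite big_mkord.
change (H 0%N + \sum_(i < n.*2) H i.+1 = 2%:R * qform x).
rewrite (sum_pairs (fun m => H m.+1)) /qform /H /= mulrDr; congr (_ + _).
  by rewrite /xn; ring.
rewrite mulr_sumr; apply: eq_bigr => i _.
have p1 : pnx i.*2.+1 = i.*2.+2 by rewrite /pnx /= odd_double.
have p2 : pnx i.*2.+2 = i.*2.+1 by rewrite /pnx /= odd_double.
rewrite p1 p2.
rewrite /xn; ring.
Qed.

Hypothesis h2 : (2%:R : R) \is a GRing.unit.

Lemma qformD (v w : V) : qform (v + w) = qform v + qform w + bform v w.
Proof.
apply: (mulrI h2); rewrite -bform_qform.
rewrite (_ : 2%:R * (qform v + qform w + bform v w) =
  2%:R * qform v + 2%:R * qform w + 2%:R * bform v w); last by ring.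
rewrite -!bform_qform !(bformDl, bformDr) (bform_sym w v); ring.
Qed.
Lemma qformZ (c : R) (v : V) : qform (c *: v) = c ^+ 2 * qform v.
Proof.
apply: (mulrI h2); rewrite -bform_qform mulrCA -bform_qform.
rewrite bformZl bformZr; ring.
Qed.
Lemma qformN (v : V) : qform (- v) = qform v.
Proof. by rewrite -scaleN1r qformZ; rewrite expr2 mulN1r opprK mul1r. Qed.
Lemma qformB (v w : V) : qform (v - w) = qform v + qform w - bform v w.
Proof. by rewrite qformD qformN bformNr. Qed.
Lemma qform0 : qform (0 : V) = 0.
Proof. by rewrite -(scale0r (0 : V)) qformZ expr2 !mul0r. Qed.
Lemma qform_iso (v : V) : bform v v = 0 -> qform v = 0.
Proof. by move=> h; apply: (mulrI h2); rewrite -bform_qform h mulr0. Qed.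

Ltac bexp := rewrite ?(bformDl, bformDr, bformZl, bformZr, bformNl, bformNr,
  bformBl, bformBr, qformD, qformZ, qformN, qformB, bform0l, bform0r, qform0).
Ltac vfin := apply/matrixP => ? ?; rewrite !mxE; ring.

Lemma esd_add (u v w : V) : bform u u = 0 -> bform u v = 0 -> bform u w = 0 ->
  esd u (v + w) = esd u v *m esd u w.
Proof.
move=> huu huv huw; have hvu : bform v u = 0 by rewrite bform_sym.
have hwu : bform w u = 0 by rewrite bform_sym.
apply: mx_ext => x; rewrite -mulmxA !esd_apply; bexp.
rewrite ?huu ?huv ?huw ?hvu ?hwu ?(bform_sym w v); vfin.
Qed.

Ltac hyps := repeat match goal with
  | H : bform ?a ?b = _ |- _ => try rewrite (bform_sym b a); rewrite ?H; clear H
  | H : qform ?a = _ |- _ => rewrite ?H; clear H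
  end.

Lemma esd0 (u : V) : esd u 0 = 1%:M.
Proof. apply: mx_ext => x; rewrite esd_apply mul1mx; bexp; vfin. Qed.

Lemma esd_multiple (u : V) c : bform u u = 0 -> esd u (c *: u) = 1%:M.
Proof.
move=> huu; have := qform_iso huu => qu.
apply: mx_ext => x; rewrite esd_apply mul1mx; bexp; hyps; vfin.
Qed.

Lemma esd_swap (u v : V) : bform u u = 0 -> bform v v = 0 -> bform u v = 0 ->
  esd u v *m esd v u = 1%:M.
Proof.
move=> huu hvv huv; have := qform_iso huu => qu; have := qform_iso hvv => qv.
apply: mx_ext => x; rewrite -mulmxA !esd_apply mul1mx; bexp; hyps; vfin.
Qed.

Lemma esd_scale c (x y : V) : bform x x = 0 -> bform y y = 0 -> bform x y = 0 ->
  esd (c *: x) y = esd x (c *: y).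
Proof.
move=> hxx hyy hxy; have := qform_iso hyy => qy.
apply: mx_ext => z; rewrite !esd_apply; bexp; hyps; vfin.
Qed.

Lemma esd_comm (t s f g : V) :
  bform t t = 0 -> bform s s = 0 -> bform f f = 0 -> bform g g = 0 ->
  bform f g = 1 -> bform t g = 0 -> bform f s = 0 -> bform t f = 0 ->
  bform g s = 0 -> bform t s = 0 ->
  esd t s = esd t f *m esd g s *m esd t (- f) *m esd g (- s).
Proof.
move=> htt hss hff hgg hfg htg hfs htf hgs hts.
have := qform_iso hss => qs; have := qform_iso hff => qf.
apply: mx_ext => x; rewrite -!mulmxA !esd_apply; bexp; hyps; vfin.
Qed.

Lemma esd_gcomm (u1 u2 e : V) a b :
  bform u1 u1 = 0 -> bform u2 u2 = 0 -> bform u1 u2 = 0 ->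
  bform u1 e = 0 -> bform u2 e = 0 -> bform e e = 2%:R ->
  esd u1 ((- (2%:R * a * b)) *: u2) =
  esd u1 (a *: e) *m esd u2 (b *: e) *m esd u1 (- (a *: e)) *m esd u2 (- (b *: e)).
Proof.
move=> h11 h22 h12 h1e h2e hee.
have qe : qform e = 1.
  by apply: (mulrI h2); rewrite -bform_qform hee mulr1.
have := qform_iso h22 => q2.
apply: mx_ext => x; rewrite -!mulmxA !esd_apply; bexp; hyps; vfin.
Qed.

End Work.


Section Work2.
Variable R : comUnitRingType.
Variable n : nat.
Local Notation N := (n.*2.+1).
Local Notation V := 'cV[R]_N.
Local Notation phi := (phi_tilde R n).
Local Notation E := (@E R n).
Local Notation xn := (@xn R n).

Ltac vfin := apply/matrixP => ? ?; rewrite !mxE; ring.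

Definition pt (k : 'I_N) : 'I_N := ix n (pnx k).

Lemma pnx_pos (k : nat) : (0 < k)%N -> (0 < pnx k)%N.
Proof. rewrite /pnx; case: ifP => ok kp; lia. Qed.
Lemma pnxK (k : nat) : (0 < k)%N -> pnx (pnx k) = k.
Proof.
rewrite /pnx => kp; case ok: (odd k).
  by rewrite /= ok.
have -> : odd k.-1 by move: ok kp; case: k => //= k; case: (odd k).
lia.
Qed.
Lemma pnx_neq (k : nat) : (0 < k)%N -> pnx k != k.
Proof. rewrite /pnx; case: ifP => ok kp; lia. Qed.
Lemma val_pt (k : 'I_N) : (0 < k)%N -> nat_of_ord (pt k) = pnx k.
Proof. by move=> kp; rewrite /pt /ix inordK // pnx_lt. Qed.
Lemma pt_pos (k : 'I_N) : (0 < k)%N -> (0 < pt k)%N.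
Proof. by move=> kp; rewrite val_pt // pnx_pos. Qed.
Lemma ptK (k : 'I_N) : (0 < k)%N -> pt (pt k) = k.
Proof.
move=> kp; apply: ord_inj; rewrite val_pt ?pt_pos // val_pt //.
by rewrite pnxK.
Qed.

Lemma bEE (j k : 'I_N) : bform (E j) (E k) = phi j k.
Proof. by rewrite /bform /E trmx_delta -rowE -colE !mxE. Qed.
Lemma bEE0 (j k : 'I_N) : (0 < j)%N -> k != pt j -> bform (E j) (E k) = 0.
Proof.
move=> jp kj; rewrite bEE phiE; have -> : (j == 0 :> nat) = false by lia.
rewrite /= jp /=; case: ifP => // /eqP h; case/eqP: kj; apply: ord_inj.
by rewrite val_pt.
Qed.
Lemma bEE1 (j : 'I_N) : (0 < j)%N -> bform (E j) (E (pt j)) = 1.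
Proof.
move=> jp; rewrite bEE phiE; have -> : (j == 0 :> nat) = false by lia.
by rewrite /= jp val_pt // eqxx.
Qed.
Lemma bE00 : bform (E ord0) (E ord0) = 2%:R.
Proof. by rewrite bEE phiE. Qed.
Lemma bEEiso (j : 'I_N) : (0 < j)%N -> bform (E j) (E j) = 0.
Proof.
move=> jp; apply: bEE0 => //; apply/eqP => h.
have := congr1 (@nat_of_ord N) h; rewrite val_pt // => h'.
by move: (pnx_neq jp); rewrite -h' eqxx.
Qed.
Lemma bEE0r (j : 'I_N) : (0 < j)%N -> bform (E j) (E ord0) = 0.
Proof.
move=> jp; apply: bEE0 => //; apply/eqP => h.
have := congr1 (@nat_of_ord N) h; rewrite val_pt //= => h'.
by move: (pnx_pos jp); rewrite -h'.
Qed.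

Lemma in_EO_mul (A B : 'M[R]_N) : in_EO A -> in_EO B -> in_EO (A *m B).
Proof.
elim=> [|g A' hg _ IH|g A' hg _ IH] hB; first by rewrite mul1mx.
  by rewrite -mulmxA; apply: EO_mul => //; apply: IH.
by rewrite -mulmxA; apply: EO_mulV => //; apply: IH.
Qed.

Lemma delta_mul (a b : 'I_N) (x : V) : delta_mx a b *m x = x b ord0 *: E a.
Proof.
apply/matrixP => i j; rewrite !mxE (bigD1 b) //= big1 => [|k /negbTE kb].
  by rewrite !mxE eqxx (ord1 j) eqxx !andbT addr0 mulrC.
by rewrite !mxE kb andbF mul0r.
Qed.

Lemma xnE_E (k : 'I_N) (m : nat) : (m < N)%N -> xn (E k) m = (m == k :> nat)%:R.
Proof.
by move=> mN; rewrite /xn /E mxE eqxx andbT -val_eqE /= /ix inordK.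
Qed.

Lemma ixK (k : 'I_N) : ix n k = k.
Proof. by rewrite /ix inord_val. Qed.

Lemma F1E (h2 : (2%:R : R) \is a GRing.unit) (i : 'I_n) l :
  F1 i l = esd (E (ix n i.*2.+1)) ((- l) *: E (ix n 0)).
Proof.
have hi := ltn_ord i.
apply: mx_ext => x; rewrite esd_apply /F1 /emx.
rewrite mulmxDl mul1mx -scalemxAl !mulmxBl -!scalemxAl !delta_mul.
rewrite (qformZ h2) bformZl !bformE_l /=.
have -> : (ix n i.*2.+1 == 0 :> nat) = false by rewrite /ix inordK //; lia.
have -> : pnx (ix n i.*2.+1) = i.*2.+2 by rewrite /ix inordK /pnx /= ?odd_double //; lia.
have -> : nat_of_ord (ix n 0) = 0%N by rewrite /ix inordK.
have q1 : qform (E (ix n 0)) = 1.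
  have e0 : ix n 0 = ord0 by apply: ord_inj; rewrite /ix inordK.
  by rewrite e0; apply: (mulrI h2); rewrite -bform_qform bE00 mulr1.
rewrite q1 /xn /= ?ixK; vfin.
Qed.

Lemma F2E (h2 : (2%:R : R) \is a GRing.unit) (i : 'I_n) l :
  F2 i l = esd (E (ix n i.*2.+2)) ((- l) *: E (ix n 0)).
Proof.
have hi := ltn_ord i.
apply: mx_ext => x; rewrite esd_apply /F2 /emx.
rewrite mulmxDl mul1mx -scalemxAl !mulmxBl -!scalemxAl !delta_mul.
rewrite (qformZ h2) bformZl !bformE_l /=.
have -> : (ix n i.*2.+2 == 0 :> nat) = false by rewrite /ix inordK //; lia.
have -> : pnx (ix n i.*2.+2) = i.*2.+1 by rewrite /ix inordK /pnx /= ?odd_double //; lia.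
have -> : nat_of_ord (ix n 0) = 0%N by rewrite /ix inordK.
have q1 : qform (E (ix n 0)) = 1.
  have e0 : ix n 0 = ord0 by apply: ord_inj; rewrite /ix inordK.
  by rewrite e0; apply: (mulrI h2); rewrite -bform_qform bE00 mulr1.
rewrite q1 /xn /= ?ixK; vfin.
Qed.
End Work2.

Section More.
Variable R : comUnitRingType.
Variable n : nat.
Local Notation N := (n.*2.+1).
Local Notation V := 'cV[R]_N.
Hypothesis h2 : (2%:R : R) \is a GRing.unit.
Local Notation E := (@E R n).

Lemma esd_invr (u v : V) : bform u u = 0 -> bform u v = 0 ->
  esd u v *m esd u (- v) = 1%:M.
Proof.
move=> huu huv; rewrite -esd_add // ?subrr ?esd0 //.
by rewrite bformNr huv oppr0.
Qed.

Lemma ix_pos k : (0 < k)%N -> (k < N)%N -> (0 < ix n k)%N.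
Proof. by move=> kp kN; rewrite /ix inordK. Qed.

Lemma gen_unit (g : 'M[R]_N) : EO_gen g -> g \in unitmx.
Proof.
have e0 : ix n 0 = ord0 by apply: ord_inj; rewrite /ix inordK.
case=> i [l [->|->]]; [rewrite F1E // e0 | rewrite F2E // e0].
- have hp : (0 < ix n i.*2.+1)%N by apply: ix_pos; have := ltn_ord i; lia.
  apply: (proj1 (mulmx1_unit (esd_invr _ _))); first exact: bEEiso.
  by rewrite bformZr bEE0r // mulr0.
- have hp : (0 < ix n i.*2.+2)%N by apply: ix_pos; have := ltn_ord i; lia.
  apply: (proj1 (mulmx1_unit (esd_invr _ _))); first exact: bEEiso.
  by rewrite bformZr bEE0r // mulr0.
Qed.

Lemma in_EO_inv (A : 'M[R]_N) : in_EO A ->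
  exists2 B, in_EO B & A *m B = 1%:M /\ B *m A = 1%:M.
Proof.
elim=> [|g A' hg _ [B hB [h1 h2']]|g A' hg _ [B hB [h1 h2']]].
- by exists 1%:M; [exact: EO_one | rewrite mul1mx].
- have gu := gen_unit hg.
  exists (B *m invmx g).
    apply: in_EO_mul => //; rewrite -[invmx g]mulmx1; apply: EO_mulV => //; exact: EO_one.
  split.
    by rewrite -mulmxA (mulmxA A') h1 mul1mx mulmxV.
  by rewrite -mulmxA (mulmxA (invmx g)) mulVmx // mul1mx h2'.
- have gu := gen_unit hg.
  exists (B *m g).
    apply: in_EO_mul => //; rewrite -[g]mulmx1; apply: EO_mul => //; exact: EO_one.
  split.
    by rewrite -mulmxA (mulmxA A') h1 mul1mx mulVmx.
  by rewrite -mulmxA (mulmxA g) mulmxV // mul1mx h2'.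
Qed.

Lemma gen_EO (a : 'I_N) l : (0 < a)%N -> in_EO (esd (E a) (l *: E ord0)).
Proof.
move=> ap.
have e0 : ix n 0 = ord0 by apply: ord_inj; rewrite /ix inordK.
have hi : ((a.-1)./2 < n)%N by have := ltn_ord a; lia.
pose i := Ordinal hi.
case oa: (odd a).
  have ea : ix n i.*2.+1 = a by apply: ord_inj; rewrite /ix inordK /=; lia.
  have := F1E h2 i (- l); rewrite opprK ea e0 => <-.
  rewrite -[F1 _ _]mulmx1; apply: EO_mul; last exact: EO_one.
  by exists i, (- l); left.
have ea : ix n i.*2.+2 = a by apply: ord_inj; rewrite /ix inordK /=; lia.
have := F2E h2 i (- l); rewrite opprK ea e0 => <-.
rewrite -[F2 _ _]mulmx1; apply: EO_mul; last exact: EO_one.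
by exists i, (- l); right.
Qed.

Lemma root_EO (a b : 'I_N) c : (0 < a)%N -> (0 < b)%N -> b != pt a ->
  in_EO (esd (E a) (c *: E b)).
Proof.
move=> ap bp ba.
have -> : c = - (2%:R * 1 * (- (c / 2%:R))) by rewrite mulr1 mulrN opprK mulrC divrK.
rewrite (esd_gcomm h2 (e := E ord0)); first last.
- exact: bE00.
- exact: bEE0r.
- exact: bEE0r.
- exact: bEE0.
- exact: bEEiso.
- exact: bEEiso.
rewrite -!scaleNr.
by repeat apply: in_EO_mul; apply: gen_EO.
Qed.
End More.


Section Main.
Variable R : comUnitRingType.
Variable n : nat.
Local Notation N := (n.*2.+1).
Local Notation V := 'cV[R]_N.
Hypothesis h2 : (2%:R : R) \is a GRing.unit.
Local Notation E := (@E R n).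
Local Notation pt := (@pt n).

Lemma Eentry (a i : 'I_N) : E a i ord0 = (i == a)%:R.
Proof. by rewrite /E mxE eqxx andbT. Qed.

Lemma bEx (k : 'I_N) (x : V) : (0 < k)%N -> bform (E k) x = x (pt k) ord0.
Proof.
move=> kp; rewrite bformE_l; have -> : (k == 0 :> nat) = false by lia.
by [].
Qed.

Lemma pt_inj (x y : 'I_N) : (0 < x)%N -> (0 < y)%N -> pt x = pt y -> x = y.
Proof. by move=> xp yp h; rewrite -(ptK xp) h ptK. Qed.

Lemma pt_neq (x y : 'I_N) : (0 < x)%N -> (0 < y)%N -> x != y -> pt x != pt y.
Proof. by move=> xp yp; apply: contraNneq => /pt_inj ->. Qed.

Lemma pt_sym (a b : 'I_N) : (0 < a)%N -> (0 < b)%N -> b != pt a -> a != pt b.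
Proof.
move=> ap bp; apply: contraNneq => ->; by rewrite ptK.
Qed.

Lemma esd_sum_EO (u : V) I (r : seq I) (F : I -> V) : bform u u = 0 ->
  (forall i, bform u (F i) = 0) -> (forall i, in_EO (esd u (F i))) ->
  in_EO (esd u (\sum_(i <- r) F i)).
Proof.
move=> huu hF hE; elim: r => [|x r IH]; first by rewrite big_nil (esd0 h2); exact: EO_one.
rewrite big_cons (esd_add h2) //; first exact: in_EO_mul.
by rewrite bform_sumr big1.
Qed.

Lemma L1 (k : 'I_N) (y : V) : (0 < k)%N -> y ord0 ord0 = 0 -> y (pt k) ord0 = 0 ->
  in_EO (esd (E k) y).
Proof.
move=> kp y0 yk; rewrite (vec_sum y); apply: esd_sum_EO.
- exact: bEEiso.
- move=> j; rewrite bformZr; case: (eqVneq j (pt k)) => [->|ne].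
    by rewrite yk mul0r.
  by rewrite bEE0 // mulr0.
- move=> j; case: (eqVneq j (pt k)) => [->|ne].
    by rewrite yk scale0r (esd0 h2); exact: EO_one.
  case: (eqVneq j ord0) => [->|jn0].
    by rewrite y0 scale0r (esd0 h2); exact: EO_one.
  apply: (root_EO h2) => //; by rewrite lt0n; apply: contra jn0 => /eqP h; apply/eqP/ord_inj.
Qed.

Lemma L2 (k : 'I_N) (y : V) c : (0 < k)%N -> bform y y = 0 ->
  y ord0 ord0 = 0 -> y (pt k) ord0 = 0 -> in_EO (esd y (c *: E k)).
Proof.
move=> kp hyy y0 yk.
have hA : in_EO (esd (E k) (c *: y)) by apply: L1; rewrite // mxE ?y0 ?yk mulr0.
have hky : bform (E k) y = 0 by rewrite bEx.
have hsw : esd y (c *: E k) *m esd (c *: E k) y = 1%:M.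
  apply: (esd_swap h2) => //.
    by rewrite bformZl bformZr bEEiso // !mulr0.
  by rewrite bformZr bform_sym hky mulr0.
rewrite (esd_scale h2) // ?bEEiso // in hsw.
case: (in_EO_inv h2 hA) => B hB [hAB _].
have -> : esd y (c *: E k) = B.
  by rewrite -[esd y _]mulmx1 -hAB mulmxA hsw mul1mx.
exact: hB.
Qed.

Lemma iso2 (a b : 'I_N) al be : (0 < a)%N -> (0 < b)%N -> b != pt a ->
  bform (al *: E a + be *: E b) (al *: E a + be *: E b) = 0.
Proof.
move=> ap bp ba; have ab := pt_sym ap bp ba.
rewrite !(bformDl, bformDr, bformZl, bformZr) !bEEiso // !bEE0 //.
ring.
Qed.


Lemma free_nat (A B : nat) : (0 < A)%N -> (0 < B)%N ->
  exists m, [/\ (0 < m <= 5)%N, m != A, m != B, m != pnx A & m != pnx B].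
Proof.
move=> ap bp; rewrite /pnx.
case h1: [&& 1 != A, 1 != B, 1 != (if odd A then A.+1 else A.-1) & 1 != (if odd B then B.+1 else B.-1)]%N.
  by exists 1%N; move/and4P: h1 => [? ? ? ?]; split.
case h3: [&& 3 != A, 3 != B, 3 != (if odd A then A.+1 else A.-1) & 3 != (if odd B then B.+1 else B.-1)]%N.
  by exists 3%N; move/and4P: h3 => [? ? ? ?]; split.
exists 5%N; move: h1 h3 (odd_double_half A) (odd_double_half B); case: ifP => oa; case: ifP => ob; rewrite ?oa ?ob => h1 h3 ha hb; split; lia.
Qed.

Lemma free_r (a b : 'I_N) : (3 <= n)%N -> (0 < a)%N -> (0 < b)%N ->
  exists r : 'I_N, [/\ (0 < r)%N, r != a, r != b, r != pt a & r != pt b].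
Proof.
move=> hn ap bp; case: (free_nat ap bp) => m [hm ha hb hpa hpb].
have mN : (m < N)%N by lia.
exists (ix n m); have vm : nat_of_ord (ix n m) = m by rewrite /ix inordK.
split; rewrite -?val_eqE /= ?vm ?val_pt //; lia.
Qed.

Lemma ord0_neq (a : 'I_N) : (0 < a)%N -> (ord0 == a) = false.
Proof. by move=> ap; apply/negbTE; rewrite -val_eqE /= neq_ltn ap. Qed.

Lemma tentry (a b i : 'I_N) (al be : R) :
  (al *: E a + be *: E b) i ord0 = al * (i == a)%:R + be * (i == b)%:R.
Proof. by rewrite !mxE !eqxx !andbT. Qed.

Lemma good (u : V) (a b : 'I_N) al be : (3 <= n)%N ->
  bform u u = 0 -> u ord0 ord0 = 0 -> (0 < a)%N -> (0 < b)%N -> b != a -> b != pt a ->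
  bform u (al *: E a + be *: E b) = 0 -> in_EO (esd u (al *: E a + be *: E b)).
Proof.
move=> hn huu u0 ap bp bna bpa hut.
set t := al *: E a + be *: E b.
have apb := pt_sym ap bp bpa.
have htt : bform t t = 0 := iso2 al be ap bp bpa.
have pap := pt_pos ap; have pbp := pt_pos bp.
have anb : a != b by rewrite eq_sym.
have papb : pt a != pt b := pt_neq ap bp anb.
have pbpa : pt b != pt a by rewrite eq_sym.
have t0 : t ord0 ord0 = 0 by rewrite /t tentry !ord0_neq // !mulr0 addr0.
have hsw : esd u t *m esd t u = 1%:M := esd_swap h2 huu htt hut.
suff hT : in_EO (esd t u).
  case: (in_EO_inv h2 hT) => B hB [hAB _].
  by have -> : esd u t = B by rewrite -[esd u t]mulmx1 -hAB mulmxA hsw mul1mx.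
set s := u (pt a) ord0 *: E (pt a) + u (pt b) ord0 *: E (pt b).
have hts : bform t s = 0.
  have -> : bform t s = bform t u.
    rewrite /t /s !(bformDl, bformDr, bformZl, bformZr) !bEx // !Eentry !eqxx (negbTE papb) (negbTE pbpa).
    rewrite /= ?mulr1n ?mulr0n; ring.
  by rewrite bform_sym.
have eu : esd t u = esd t (u - s) *m esd t s.
  rewrite -(esd_add h2) ?subrK //.
  by rewrite bformBr hts (bform_sym t u) hut subrr.
rewrite eu; apply: in_EO_mul.
  set w1 := u - s.
  have key : forall j, w1 j ord0 = 0 \/ [/\ (0 < j)%N, j != pt a & j != pt b].
    move=> j; rewrite /w1 /s !mxE ?eqxx ?andbT.
    case: (eqVneq j (pt a)) => [->|ja].
      by left; rewrite (negbTE papb) /= ?mulr1n ?mulr0n; ring.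
    case: (eqVneq j (pt b)) => [->|jb].
      by left; rewrite /= ?mulr1n ?mulr0n; ring.
    case: (posnP j) => [j0|jp]; last by right; split.
    left; have ej : j = ord0 by apply: ord_inj.
    by rewrite ej u0 /= ?mulr0n; ring.
  rewrite (vec_sum w1); apply: esd_sum_EO => // j.
    case: (key j) => [->|[jp ja jb]]; first by rewrite scale0r bform0r.
    by rewrite bformZr /t bformDl !bformZl !bEE0 // ?(eq_sym j); ring.
  case: (key j) => [->|[jp ja jb]]; first by rewrite scale0r (esd0 h2); exact: EO_one.
  apply: L2 => //; rewrite tentry.
  have -> : (pt j == a) = false by apply/negbTE; apply: contra ja => /eqP <-; rewrite ptK.
  have -> : (pt j == b) = false by apply/negbTE; apply: contra jb => /eqP <-; rewrite ptK.
  by rewrite !mulr0 addr0.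
case: (free_r hn ap bp) => r [rp ra rb rpa rpb].
have prp := pt_pos rp.
have pra : pt r != pt a := pt_neq rp ap ra.
have prb : pt r != pt b := pt_neq rp bp rb.
have par : pt a != pt (pt r) by rewrite ptK // eq_sym.
have pbr : pt b != pt (pt r) by rewrite ptK // eq_sym.
have s0 : s ord0 ord0 = 0 by rewrite /s tentry !ord0_neq // !mulr0 addr0.
have sr : s (pt (pt r)) ord0 = 0 by rewrite /s tentry ptK // (negbTE rpa) (negbTE rpb) !mulr0 addr0.
have tr : t (pt r) ord0 = 0.
  rewrite /t tentry.
  have -> : (pt r == a) = false by apply/negbTE; apply: contra rpa => /eqP <-; rewrite ptK.
  have -> : (pt r == b) = false by apply/negbTE; apply: contra rpb => /eqP <-; rewrite ptK.
  by rewrite !mulr0 addr0.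
rewrite (esd_comm h2 (f := E r) (g := E (pt r))).
- apply: in_EO_mul; last first.
    apply: L1 => //; by rewrite mxE ?s0 ?sr oppr0.
  apply: in_EO_mul; last by rewrite -scaleN1r; apply: L2.
  apply: in_EO_mul; last exact: L1.
  by rewrite -[E r]scale1r; apply: L2.
- exact: htt.
- by rewrite /s iso2 // ptK // eq_sym.
- exact: bEEiso.
- exact: bEEiso.
- exact: bEE1.
- by rewrite /t bformDl !bformZl !bEE0 // ?mulr0 ?addr0 // eq_sym.
- by rewrite /s bformDr !bformZr !bEE0 // ?mulr0 ?addr0 // eq_sym.
- by rewrite /t bformDl !bformZl !bEE0 // ?mulr0 ?addr0.
- by rewrite /s bformDr !bformZr !bEE0 // ?mulr0 ?addr0.
- exact: hts.
Qed.

End Main.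


Section Final.
Variable R : comUnitRingType.
Variable n : nat.
Local Notation N := (n.*2.+1).
Local Notation V := 'cV[R]_N.
Hypothesis h2 : (2%:R : R) \is a GRing.unit.
Hypothesis hn : (3 <= n)%N.
Local Notation E := (@E R n).
Local Notation pt := (@pt n).
Variable u : V.
Hypothesis huu : bform u u = 0.
Hypothesis u0 : u ord0 ord0 = 0.

Definition T (a k : 'I_N) : V := bform u (E k) *: E a - bform u (E a) *: E k.
Definition J (x : V) := bform u x = 0 /\ forall c, in_EO (esd u (c *: x)).

Lemma bu0 : bform u (E ord0) = 0.
Proof.
have e0 : ix n 0 = ord0 :> 'I_N by apply: ord_inj; rewrite /ix inordK.
by rewrite bform_sym bformE_l /= /xn e0 u0 mulr0.
Qed.

Lemma buE (k : 'I_N) : (0 < k)%N -> bform u (E k) = u (pt k) ord0.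
Proof. by move=> kp; rewrite bform_sym bEx. Qed.

Lemma J0 : J 0.
Proof.
split; first exact: bform0r.
by move=> c; rewrite scaler0 (esd0 h2); exact: EO_one.
Qed.

Lemma JD x y : J x -> J y -> J (x + y).
Proof.
move=> [hx ex] [hy ey]; split; first by rewrite bformDr hx hy addr0.
move=> c; rewrite scalerDr (esd_add h2) //; first exact: in_EO_mul.
  by rewrite bformZr hx mulr0.
by rewrite bformZr hy mulr0.
Qed.

Lemma JZ d x : J x -> J (d *: x).
Proof.
move=> [hx ex]; split; first by rewrite bformZr hx mulr0.
by move=> c; rewrite scalerA.
Qed.

Lemma JN x : J x -> J (- x).
Proof. by move=> hx; rewrite -scaleN1r; apply: JZ. Qed.

Lemma Jsum I (r : seq I) (P : pred I) (F : I -> V) :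
  (forall i, P i -> J (F i)) -> J (\sum_(i <- r | P i) F i).
Proof. move=> hF; apply: big_ind => //; [exact: J0 | exact: JD]. Qed.

Lemma Ju : J u.
Proof. by split => // c; rewrite (esd_multiple h2) //; exact: EO_one. Qed.

Lemma JTgood (a k : 'I_N) : (0 < a)%N -> (0 < k)%N -> k != a -> k != pt a -> J (T a k).
Proof.
move=> ap kp ka kpa; split.
  by rewrite /T bformBr !bformZr; ring.
move=> c.
have -> : c *: T a k = (c * bform u (E k)) *: E a + (- (c * bform u (E a))) *: E k.
  by rewrite /T scalerBr !scalerA scaleNr.
apply: (good h2) => //.
rewrite bformDr !bformZr; ring.
Qed.

Lemma Taa (a : 'I_N) : T a a = 0.
Proof. by rewrite /T subrr. Qed.

Lemma I1 (a : 'I_N) : \sum_k u k ord0 *: T a k = - bform u (E a) *: u.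
Proof.
have hs : \sum_k u k ord0 * bform u (E k) = 0.
  rewrite -[RHS]huu bform_expand; apply: eq_bigr => k _; by rewrite bform_sym.
rewrite (eq_bigr (fun k => (u k ord0 * bform u (E k)) *: E a -
    bform u (E a) *: (u k ord0 *: E k))); last first.
  move=> k _; rewrite /T scalerBr !scalerA; congr (_ - _ *: _); exact: mulrC.
rewrite sumrB -scaler_suml -scaler_sumr -vec_sum hs scale0r sub0r scaleNr //.
Qed.

Lemma Jbad_a (a : 'I_N) : (0 < a)%N -> J (bform u (E a) *: T a (pt a)).
Proof.
move=> ap.
have e1 := I1 a; rewrite (bigD1 (pt a)) //= -(buE ap) in e1.
have -> : bform u (E a) *: T a (pt a) =
    - bform u (E a) *: u - \sum_(k | k != pt a) u k ord0 *: T a k.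
  by rewrite -e1 addrK.
apply: JD; first by apply: JZ; exact: Ju.
apply: JN; apply: Jsum => k kpa.
case: (eqVneq k ord0) => [->|k0]; first by rewrite u0 scale0r; exact: J0.
case: (eqVneq k a) => [->|ka]; first by rewrite Taa scaler0; exact: J0.
apply: JZ; apply: JTgood => //.
by rewrite lt0n; apply: contra k0 => /eqP h; apply/eqP/ord_inj.
Qed.

Variable w : V.
Hypothesis hw : bform u w = 1.

Lemma Jbad (a : 'I_N) : (0 < a)%N -> J (T a (pt a)).
Proof.
move=> ap.
have hs : \sum_j w j ord0 * bform u (E j) = 1.
  rewrite -[RHS]hw {2}(vec_sum w) bform_sumr; apply: eq_bigr => j _; by rewrite bformZr.
have -> : T a (pt a) = \sum_j w j ord0 *: (bform u (E j) *: T a (pt a)).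
  rewrite (eq_bigr (fun j => (w j ord0 * bform u (E j)) *: T a (pt a))); last by move=> j _; rewrite scalerA.
  by rewrite -scaler_suml hs scale1r.
apply: Jsum => j _; apply: JZ.
case: (eqVneq j ord0) => [->|j0]; first by rewrite bu0 scale0r; exact: J0.
have jp : (0 < j)%N by rewrite lt0n; apply: contra j0 => /eqP h; apply/eqP/ord_inj.
case: (eqVneq j a) => [->|ja]; first exact: Jbad_a.
case: (eqVneq j (pt a)) => [->|jpa].
  have -> : bform u (E (pt a)) *: T a (pt a) =
      - (bform u (E (pt a)) *: T (pt a) (pt (pt a))).
    by rewrite ptK // /T; apply/matrixP => ? ?; rewrite !mxE; ring.
  by apply: JN; apply: Jbad_a; apply: pt_pos.
have -> : bform u (E j) *: T a (pt a) =
    bform u (E (pt a)) *: T a j + bform u (E a) *: T j (pt a).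
  by rewrite /T; apply/matrixP => ? ?; rewrite !mxE; ring.
have pap := pt_pos ap.
apply: JD; apply: JZ; apply: JTgood => //.
- by rewrite eq_sym.
- apply: contra ja => /eqP h; apply/eqP; by rewrite -(ptK jp) -h ptK.
Qed.

Hypothesis w0 : w ord0 ord0 = 0.

Lemma Jv (v : V) : v ord0 ord0 = 0 -> bform u v = 0 -> J v.
Proof.
move=> v0 huv.
have hs : \sum_k w k ord0 * bform u (E k) = 1.
  rewrite -[RHS]hw {2}(vec_sum w) bform_sumr; apply: eq_bigr => j _; by rewrite bformZr.
have inner : forall a, \sum_k (v a ord0 * w k ord0) *: T a k =
    v a ord0 *: E a - (v a ord0 * bform u (E a)) *: w.
  move=> a.
  rewrite (eq_bigr (fun k => (v a ord0 * (w k ord0 * bform u (E k))) *: E a -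
      (v a ord0 * bform u (E a)) *: (w k ord0 *: E k))); last first.
    move=> k _; rewrite /T scalerBr !scalerA; congr (_ *: _ - _ *: _); ring.
  by rewrite sumrB -scaler_suml -scaler_sumr -vec_sum -mulr_sumr hs mulr1.
have -> : v = \sum_a \sum_k (v a ord0 * w k ord0) *: T a k.
  rewrite (eq_bigr _ (fun a _ => inner a)) sumrB -scaler_suml -vec_sum.
  have -> : \sum_a v a ord0 * bform u (E a) = 0.
    by rewrite -[RHS]huv bform_sym bform_expand; apply: eq_bigr => a _; rewrite bform_sym.
  by rewrite scale0r subr0.
apply: Jsum => a _; apply: Jsum => k _.
case: (eqVneq a ord0) => [->|a0]; first by rewrite v0 mul0r scale0r; exact: J0.
have ap : (0 < a)%N by rewrite lt0n; apply: contra a0 => /eqP h; apply/eqP/ord_inj.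
case: (eqVneq k ord0) => [->|k0]; first by rewrite w0 mulr0 scale0r; exact: J0.
have kp : (0 < k)%N by rewrite lt0n; apply: contra k0 => /eqP h; apply/eqP/ord_inj.
apply: JZ.
case: (eqVneq k a) => [->|ka]; first by rewrite Taa; exact: J0.
case: (eqVneq k (pt a)) => [->|kpa]; first exact: Jbad.
exact: JTgood.
Qed.

End Final.

Theorem mainTheorem7 (R : comUnitRingType) (n : nat) (u v : 'cV[R]_(n.*2.+1)) :
  (2%:R : R) \is a GRing.unit ->
  (3 <= n)%N ->
  u (ix n 0) ord0 = 0 ->
  v (ix n 0) ord0 = 0 ->
  unimodular u ->
  qform u = 0 ->
  bform u v = 0 ->
  in_EO (esd u v).
Proof.
move=> h2 hn hu0 hv0 [w' hw'] qu huv.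
have e0 : ix n 0 = ord0 :> 'I_(n.*2.+1) by apply: ord_inj; rewrite /ix inordK.
rewrite e0 in hu0 hv0.
have huu : bform u u = 0 by rewrite bform_qform qu mulr0.
pose w : 'cV[R]_(n.*2.+1) :=
  \sum_k (if k == ord0 then 0 else w' k ord0) *: @E R n (pt k).
have hw : bform u w = 1.
  rewrite /w bform_sumr -hw'; apply: eq_bigr => k _; rewrite bformZr.
  case: (eqVneq k ord0) => [->|k0]; first by rewrite hu0 !mul0r mulr0.
  have kp : (0 < k)%N by rewrite lt0n; apply: contra k0 => /eqP h; apply/eqP/ord_inj.
  by rewrite bform_sym bEx ?pt_pos // ptK.
have w0 : w ord0 ord0 = 0.
  rewrite /w summxE big1 // => k _; rewrite mxE Eentry.
  case: (eqVneq k ord0) => [->|k0]; first by rewrite mul0r.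
  have kp : (0 < k)%N by rewrite lt0n; apply: contra k0 => /eqP h; apply/eqP/ord_inj.
  by rewrite ord0_neq ?pt_pos // mulr0.
have := Jv h2 hn huu hu0 hw w0 hv0 huv.
by case=> _ /(_ 1); rewrite scale1r.
Qed.
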